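(* Let $q\in\mathbb{C}^\times$ be not a root of unity and $Q\in\mathbb{C}^\times$. (i) For $\varphi,\varphi'\in\mathbb{C}[x]\setminus\{0\}$ with $\deg\varphi\ge\deg\varphi'$, one has $\mathbf{u}^{\langle Q\rangle}(\varphi)=\mathbf{u}^{\langle Q\rangle}(\varphi')$ if and only if $$\varphi=q^{-(\deg\varphi-\deg\varphi')}\,\varphi'\prod_{z=1}^{\deg\varphi-\deg\varphi'}\big(x-q^{-2(z-1)}\beta_\varphi^{-2}Q^{-1}\big).$$ (ii) The restriction of $\mathbf{u}^{\langle Q\rangle}$ to $\mathbb{C}[x]^{\langle Q\rangle}$ is injective, and for every nonzero $\varphi\in\mathbb{C}[x]$ there exists a unique $\varphi'\in\mathbb{C}[x]^{\langle Q\rangle}$ with $\mathbf{u}^{\langle Q\rangle}(\varphi)=\mathbf{u}^{\langle Q\rangle}(\varphi')$.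
   Context: For $t,k>0$, $p_t(q)(x_1,\dots,x_k)=\sum_{\lambda\vdash t,\ \ell(\lambda)\le k}q^{-\ell(\lambda)}(q-q^{-1})^{\ell(\lambda)-1}m_\lambda(x_1,\dots,x_k)$, where $m_\lambda$ is the monomial symmetric polynomial and $\ell(\lambda)$ the number of nonzero parts. For $\beta\in\mathbb{C}^\times$ put $\tilde\beta=(q-q^{-1})^{-1}(1-\beta^{-2})$ and $p^{\langle Q\rangle}_t(q;\beta)(x_1,\dots,x_k)=p_t(q)(x_1,\dots,x_k)+\tilde\beta Q^{-t}+(q-q^{-1})\sum_{z=1}^{t-1}\tilde\beta Q^{-t+z}p_z(q)(x_1,\dots,x_k)$. For nonzero $\varphi=\beta_\varphi(x-\gamma_1)\cdots(x-\gamma_k)\in\mathbb{C}[x]$ ($\beta_\varphi$ the leading coefficient), with $\tilde\beta_\varphi=(q-q^{-1})^{-1}(1-\beta_\varphi^{-2})$, define $\mathbf{u}^{\langle Q\rangle}(\varphi)\in\mathbb{C}^\times\times\prod_{t>0}\mathbb{C}$ to be $(\beta_\varphi,(\tilde\beta_\varphi Q^{-t})_{t>0})$ if $\deg\varphi=0$ and $(\beta_\varphi q^{\deg\varphi},(p^{\langle Q\rangle}_t(q;\beta_\varphi)(\gamma_1,\dots,\gamma_k))_{t>0})$ if $\deg\varphi>0$. Let $\mathbb{C}[x]^{\langle Q\rangle}=\{\varphi\in\mathbb{C}[x]\setminus\{0\}:\beta_\varphi^{-2}Q^{-1}\text{ is not a root of }\varphi\}$. *)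

(* Defs.v *)
From HB Require Import structures.
From mathcomp Require Import all_boot all_order all_algebra.
From mathcomp Require Import complex.
From mathcomp Require Import reals.
Set Implicit Arguments. Unset Strict Implicit. Unset Printing Implicit Defensive.
Import Order.TTheory GRing.Theory Num.Theory.
Local Open Scope ring_scope.

Section Defs.
Variable F : closedFieldType.

(* A partition lambda of t with at most k parts is represented by the
   nonincreasing k-vector (lambda_1 >= ... >= lambda_k >= 0) summing to t
   (padding with zeros).  Entries are bounded by t. *)
Definition is_part (k t : nat) (lam : {ffun 'I_k -> 'I_t.+1}) : bool :=
  [forall i : 'I_k, forall j : 'I_k, (i <= j)%N ==> (lam j <= lam i)%N]
  && (\sum_(i < k) (lam i : nat) == t)%N.

Definition plen (k t : nat) (lam : {ffun 'I_k -> 'I_t.+1}) : nat :=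
  #|[pred i : 'I_k | (lam i : nat) != 0%N]|.

Definition msym_eval (k t : nat) (lam : {ffun 'I_k -> 'I_t.+1}) (x : 'I_k -> F) : F :=
  \sum_(alpha : {ffun 'I_k -> 'I_t.+1} | perm_eq (codom alpha) (codom lam))
     \prod_(i < k) x i ^+ alpha i.

Definition p_t (q : F) (t : nat) (xs : seq F) : F :=
  \sum_(lam : {ffun 'I_(size xs) -> 'I_t.+1} | is_part lam)
     q ^- plen lam * (q - q^-1) ^+ (plen lam).-1
       * msym_eval lam (fun i => nth 0 xs i).

Definition btilde (q b : F) : F := (q - q^-1)^-1 * (1 - b ^- 2).

Definition pQ_t (Q q b : F) (t : nat) (xs : seq F) : F :=
  p_t q t xs + btilde q b * Q ^- t
  + (q - q^-1) * \sum_(1 <= z < t) btilde q b * Q ^- (t - z) * p_t q z xs.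

(* the roots gamma_1, ..., gamma_k of phi (with multiplicity), chosen so that
   phi = beta_phi (x - gamma_1) ... (x - gamma_k) *)
Definition roots_of (phi : {poly F}) : seq F := sval (closed_field_poly_normal phi).

(* u^{<Q>}(phi) in C^x * prod_{t>0} C; the sequence component s encodes
   (a_t)_{t>0} via s n = a_{n+1}. *)
Definition uQ (Q q : F) (phi : {poly F}) : F * (nat -> F) :=
  let b := lead_coef phi in
  if (size phi).-1 == 0%N then (b, fun n => btilde q b * Q ^- n.+1)
  else (b * q ^+ (size phi).-1, fun n => pQ_t Q q b n.+1 (roots_of phi)).

Definition inCQ (Q : F) (phi : {poly F}) : bool :=
  (phi != 0) && ~~ root phi ((lead_coef phi) ^- 2 * Q^-1).

End Defs.

(* Main.v *)
Require Import Defs.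
From HB Require Import structures.
From mathcomp Require Import all_boot all_order all_algebra.
From mathcomp Require Import complex.
From mathcomp Require Import reals.
From mathcomp Require Import zify ring.
From Stdlib Require Import FunctionalExtensionality.
Set Implicit Arguments. Unset Strict Implicit. Unset Printing Implicit Defensive.
Import Order.TTheory GRing.Theory Num.Theory.
Local Open Scope ring_scope.


Section Comb.
Variables (k t : nat).
Notation fT := {ffun 'I_k -> 'I_t.+1}.

Lemma sum_codom (a : fT) : (\sum_(i < k) (a i : nat) = \sum_(m <- codom a) (m : nat))%N.
Proof. by rewrite codomE big_map big_enum. Qed.

Definition geo : rel 'I_t.+1 := fun a b => (b <= a)%N.

Lemma geo_trans : transitive geo.
Proof. by move=> a b c; rewrite /geo => h1 h2; apply: leq_trans h2 h1. Qed.
Lemma geo_anti : antisymmetric geo.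
Proof. by move=> a b /andP[h1 h2]; apply: val_inj; apply/eqP; rewrite eqn_leq; apply/andP; split. Qed.
Lemma geo_total : total geo.
Proof. by move=> a b; rewrite /geo leq_total. Qed.
Lemma geo_refl : reflexive geo.
Proof. by move=> a; rewrite /geo leqnn. Qed.

Lemma part_sorted (l : fT) : is_part l -> sorted geo (codom l).
Proof.
case/andP=> /forallP H _; rewrite codomE sorted_map.
have: sorted (relpre val leq) (enum 'I_k) by rewrite -sorted_map val_enum_ord iota_sorted.
apply: sub_sorted => i j /= hij; rewrite /geo.
by have /forallP/(_ j)/implyP := H i; apply.
Qed.

Lemma codom_inj (a b : fT) : codom a = codom b -> a = b.
Proof.
rewrite !codomE => /eq_in_map h; apply/ffunP => i; apply: h.
by rewrite mem_enum.
Qed.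

Lemma part_uniq (l l' : fT) : is_part l -> is_part l' ->
  perm_eq (codom l) (codom l') -> l = l'.
Proof.
move=> hl hl' hp; apply: codom_inj.
apply: (sorted_eq geo_trans geo_anti) => //; exact: part_sorted.
Qed.

Lemma codom_nth (s : seq 'I_t.+1) : size s = k ->
  codom [ffun i : 'I_k => nth ord0 s i] = s.
Proof.
move=> hs; rewrite codomE.
have -> : [seq [ffun i : 'I_k => nth ord0 s i] i | i <- enum 'I_k]
   = [seq nth ord0 s i | i <- [seq val i | i <- enum 'I_k]].
  by rewrite -map_comp; apply: eq_map => i /=; rewrite ffunE.
by rewrite val_enum_ord -hs; exact: mkseq_nth.
Qed.

Lemma part_exists (a : fT) : (\sum_(i < k) (a i : nat) = t)%N ->
  exists l : fT, is_part l && perm_eq (codom a) (codom l).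
Proof.
move=> hsum.
set s := sort geo (codom a).
have hs : size s = k by rewrite size_sort size_codom card_ord.
exists [ffun i : 'I_k => nth ord0 s i].
rewrite codom_nth // perm_sym perm_sort perm_refl andbT.
apply/andP; split.
  apply/forallP => i; apply/forallP => j; apply/implyP => hij; rewrite !ffunE.
  have := sorted_leq_nth geo_trans geo_refl ord0 (sort_sorted geo_total (codom a)).
  by apply; rewrite ?inE ?hs.
rewrite sum_codom codom_nth //.
have -> : (\sum_(m <- s) (m:nat) = \sum_(m <- codom a) (m:nat))%N.
  by apply: perm_big; rewrite perm_sort.
by rewrite -sum_codom hsum.
Qed.

Lemma reindex_part (R : nmodType) (G : fT -> R) :
  \sum_(l : fT | is_part l) \sum_(a : fT | perm_eq (codom a) (codom l)) G a
  = \sum_(a : fT | (\sum_(i < k) (a i : nat) == t)%N) G a.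
Proof.
rewrite (exchange_big_dep (fun a : fT => \sum_(i < k) (a i : nat) == t)%N) /=; last first.
  move=> l a hl hp; case/andP: hl => _ /eqP hl; apply/eqP.
  transitivity (\sum_(i < k) (l i : nat))%N => //.
  by rewrite !sum_codom; apply: perm_big.
apply: eq_bigr => a /eqP ha.
have [l0 /andP[hl0 hp0]] := part_exists ha.
rewrite (big_pred1 l0) // => l /=; apply/idP/idP.
  case/andP=> hl hp; apply/eqP; apply: part_uniq hl hl0 _.
  by rewrite perm_sym in hp; apply: perm_trans hp hp0.
by move/eqP ->; rewrite hl0 hp0.
Qed.
End Comb.


Lemma plen_count (k t : nat) (l : {ffun 'I_k -> 'I_t.+1}) :
  plen l = count (fun m : 'I_t.+1 => (m:nat) != 0%N) (codom l).
Proof.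
rewrite /plen -sum1_card -sum1_count codomE big_map /= big_enum_cond /=.
by apply: eq_bigl => i; rewrite inE.
Qed.

Lemma plen_pos (k t : nat) (l : {ffun 'I_k -> 'I_t.+1}) :
  is_part l -> (0 < t)%N -> (0 < plen l)%N.
Proof.
case/andP=> _ /eqP hs ht; rewrite plen_count -has_count.
apply/negPn/negP => /hasPn H.
move: hs; rewrite sum_codom big1_seq; first by move=> h; rewrite -h in ht.
by move=> m /andP[_ /H]; rewrite negbK => /eqP.
Qed.

Section P1.
Variables (F : closedFieldType) (q : F).

Definition aq := q^-1 * (q - q^-1).
Definition gco (x : F) (m : nat) : F := if m == 0%N then 1 else aq * x ^+ m.

Lemma gcoE x m : gco x m = aq ^+ (m != 0%N) * x ^+ m.
Proof. by rewrite /gco; case: eqP => [->|]; rewrite ?expr0 ?mulr1 ?expr1. Qed.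

Lemma Gform (k t : nat) (xs : 'I_k -> F) (a : {ffun 'I_k -> 'I_t.+1}) :
  \prod_i gco (xs i) (a i) = aq ^+ (plen a) * \prod_i xs i ^+ a i.
Proof.
under eq_bigr do rewrite gcoE.
rewrite big_split /= prodrXr; congr (_ ^+ _ * _).
rewrite /plen -sum1_card [RHS]big_mkcond /=; apply: eq_bigr => i _.
by rewrite inE /=; case: (_ != _)%N.
Qed.

Lemma pt_sum (xs : seq F) (t : nat) : (0 < t)%N ->
  (q - q^-1) * p_t q t xs =
  \sum_(a : {ffun 'I_(size xs) -> 'I_t.+1} | (\sum_(i < size xs) (a i : nat) == t)%N)
     \prod_(i < size xs) gco (nth 0 xs i) (a i).
Proof.
move=> ht.
pose G (a : {ffun 'I_(size xs) -> 'I_t.+1}) := \prod_(i < size xs) gco (nth 0 xs i) (a i).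
rewrite -(reindex_part G) /p_t mulr_sumr; apply: eq_bigr => l hl.
rewrite /msym_eval mulrA mulr_sumr; apply: eq_bigr => a ha.
rewrite /G Gform.
have -> : plen a = plen l by rewrite !plen_count; exact: (permP ha).
have := plen_pos hl ht; case: (plen l) => // n _.
rewrite /aq exprMn exprVn exprS /= mulrCA. by rewrite exprS.
Qed.

Lemma coef_hprod (k t : nat) (xs : 'I_k -> F) :
  (\prod_(i < k) \poly_(m < t.+1) gco (xs i) m)`_t =
  \sum_(a : {ffun 'I_k -> 'I_t.+1} | (\sum_(i < k) (a i : nat) == t)%N)
     \prod_i gco (xs i) (a i).
Proof.
have E i : \poly_(m < t.+1) gco (xs i) m = \sum_(j : 'I_t.+1) (gco (xs i) j)%:P * 'X^j.
  by rewrite poly_def; apply: eq_bigr => j _; rewrite mul_polyC.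
under eq_bigr do rewrite E.
rewrite bigA_distr_bigA /= coef_sum [RHS]big_mkcond /=; apply: eq_bigr => a _.
rewrite big_split /= -rmorph_prod prodrXr coefCM coefXn eq_sym.
by case: (_ == _); rewrite ?mulr1 ?mulr0.
Qed.

End P1.


Section Trunc.
Variable F : fieldType.

Definition eqto (N : nat) (p r : {poly F}) := forall j, (j <= N)%N -> p`_j = r`_j.

Lemma eqto_refl N p : eqto N p p. Proof. by []. Qed.
Lemma eqto_sym N p r : eqto N p r -> eqto N r p.
Proof. by move=> h j hj; rewrite h. Qed.
Lemma eqto_trans N p r s : eqto N p r -> eqto N r s -> eqto N p s.
Proof. by move=> h1 h2 j hj; rewrite h1 ?h2. Qed.

Lemma eqto_mul N p p' r r' : eqto N p p' -> eqto N r r' -> eqto N (p * r) (p' * r').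
Proof.
move=> hp hr j hj; rewrite !coefM; apply: eq_bigr => i _.
have hi := ltn_ord i.
by rewrite hp ?hr //; lia.
Qed.

Lemma eqto_cancel N (r p p' : {poly F}) : r`_0 != 0 -> eqto N (r * p) (r * p') -> eqto N p p'.
Proof.
move=> h0 H.
suff: forall j, (j <= N)%N -> (p - p')`_j = 0.
  by move=> h j hj; apply/eqP; rewrite -subr_eq0 -coefB h.
elim/ltn_ind => j IH hj.
have : (r * (p - p'))`_j = 0 by rewrite mulrBr coefB H ?subrr.
rewrite coefM big_ord_recl /= subn0 big1 ?addr0.
  by move/eqP; rewrite mulf_eq0 (negPf h0) => /eqP.
move=> i _; rewrite IH ?mulr0 //.
  have := ltn_ord i; rewrite /bump /=; lia.
rewrite /bump /=; lia.
Qed.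

Lemma eqto_all (p r : {poly F}) : (forall N, eqto N p r) -> p = r.
Proof. by move=> h; apply/polyP => j; apply: (h j). Qed.

End Trunc.


Section Polys.
Variables (F : closedFieldType) (q Q : F).

Definition hpoly N x := \poly_(m < N.+1) gco q x m.
Definition Hprod N xs := \prod_(x <- xs) hpoly N x.
Definition Bpoly N (b : F) :=
  \poly_(m < N.+1) (if m == 0%N then 1 else (1 - b ^- 2) * Q ^- m).
Definition Tpoly N b xs := Hprod N xs * Bpoly N b.
Definition Phi (xs : seq F) := \prod_(x <- xs) (1 - x%:P * 'X).
Definition Psi (xs : seq F) := \prod_(x <- xs) (1 - (q ^- 2 * x)%:P * 'X).
Definition Lp (a : F) := 1 - a%:P * 'X.

Lemma Hprod_trunc t N xs : (t <= N)%N -> eqto t (Hprod N xs) (Hprod t xs).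
Proof.
move=> htN; apply: (big_ind2 (eqto t)) => //; first by move=> *; exact: eqto_mul.
move=> x _ j hj; rewrite !coef_poly; case: ifP; case: ifP => //; lia.
Qed.

Lemma coef_Hprod t xs : (0 < t)%N -> (Hprod t xs)`_t = (q - q^-1) * p_t q t xs.
Proof.
move=> ht; rewrite pt_sum // -coef_hprod /Hprod (big_nth 0) big_mkord.
by [].
Qed.

Lemma coef0_Hprod N xs : (Hprod N xs)`_0 = 1.
Proof.
rewrite coef0_prod big1 // => x _; rewrite coef_poly /= /gco //.
Qed.

Lemma coef_Hprod_N t N xs : (0 < t)%N -> (t <= N)%N ->
  (Hprod N xs)`_t = (q - q^-1) * p_t q t xs.
Proof. by move=> ht htN; rewrite (@Hprod_trunc t N xs htN t (leqnn t)) coef_Hprod. Qed.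

End Polys.

Section Polys2.
Variables (F : closedFieldType) (q Q : F).

Lemma coef_T N b xs t : q - q^-1 != 0 -> (0 < t)%N -> (t <= N)%N ->
  (Tpoly q Q N b xs)`_t = (q - q^-1) * pQ_t Q q b t xs.
Proof.
move=> hc; case: t => // t _ htN.
rewrite /Tpoly coefM big_ord_recr /= subnn big_ord_recl /= subn0.
rewrite /pQ_t big_add1 big_mkord /= !mulrDr.
rewrite coef0_Hprod coef_Hprod_N // mul1r.
have e1 : (Bpoly Q N b)`_t.+1 = (q - q^-1) * (btilde q b / Q ^+ t.+1).
  by rewrite coef_poly ltnS htN /= /btilde !mulrA mulfV // mul1r.
have e3 : (Bpoly Q N b)`_0 = 1 by rewrite coef_poly.
have hS : \sum_(i < t) (Hprod q N xs)`_(bump 0 i) * (Bpoly Q N b)`_(t.+1 - bump 0 i)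
   = (q - q^-1) * ((q - q^-1) * \sum_(i < t) btilde q b / Q ^+ (t.+1 - i.+1) * p_t q i.+1 xs).
  rewrite !mulr_sumr; apply: eq_bigr => i _.
  have hi := ltn_ord i.
  rewrite /bump /= add1n coef_Hprod_N //; last by lia.
  rewrite coef_poly subSS ifT; last by lia.
  case: eqP => [|_]; first by lia.
  rewrite /btilde; set X := (Q ^+ (t - i))^-1; set P := p_t q i.+1 xs.
  move: hc; set C := q - q^-1; set W := 1 - b ^- 2 => hc; by field.
rewrite hS e3 mulr1. rewrite -e1.
by rewrite addrC addrA.
Qed.
End Polys2.


Section E.
Variables (F : closedFieldType) (q Q : F).

Lemma eqto_hfactor N x : q != 0 ->
  eqto N ((1 - x%:P * 'X) * hpoly q N x) (1 - (q ^- 2 * x)%:P * 'X).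
Proof.
move=> hq j hj.
rewrite mulrBl mul1r -mulrA coefB coefCM coefXM coefB coef1 coefCM coefX.
rewrite !coef_poly /gco /aq.
case: j hj => [|[|j]] hj /=.
- by rewrite !mulr0.
- rewrite ltnS hj mulr1 expr1 sub0r.
  by field.
- rewrite !ltnS hj ifT /=; last by lia.
  rewrite mulr0 subr0 exprS; ring.
Qed.

Lemma eqto_bfactor N b :
  eqto N ((1 - (Q^-1)%:P * 'X) * Bpoly Q N b) (1 - (b ^- 2 * Q^-1)%:P * 'X).
Proof.
move=> j hj.
rewrite mulrBl mul1r -mulrA coefB coefCM coefXM coefB coef1 coefCM coefX.
rewrite !coef_poly.
case: j hj => [|[|j]] hj /=.
- by rewrite !mulr0.
- rewrite ltnS hj mulr1 expr1 sub0r.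
  ring.
- rewrite !ltnS hj ifT /=; last by lia.
  rewrite mulr0 subr0 [Q ^+ j.+2]exprS; set W := (1 - _); set Z := Q ^+ j.+1.
  rewrite invfM; ring.
Qed.

Lemma eqto_PhiH N xs : q != 0 -> eqto N (Phi xs * Hprod q N xs) (Psi q xs).
Proof.
move=> hq; rewrite /Phi /Hprod /Psi -big_split /=.
apply: (big_ind2 (eqto N)) => //; first by move=> *; exact: eqto_mul.
by move=> x _; apply: eqto_hfactor.
Qed.

Lemma eqto_key N b xs : q != 0 ->
  eqto N (Phi xs * Lp (Q^-1) * Tpoly q Q N b xs) (Psi q xs * Lp (b ^- 2 * Q^-1)).
Proof.
move=> hq.
have -> : Phi xs * Lp Q^-1 * Tpoly q Q N b xs
   = (Phi xs * Hprod q N xs) * (Lp Q^-1 * Bpoly Q N b).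
  by rewrite /Tpoly; ring.
apply: eqto_mul; first exact: eqto_PhiH.
exact: eqto_bfactor.
Qed.

End E.


Section G.
Variables (F : closedFieldType) (q Q : F).

Lemma Lp0 (a : F) : (Lp a)`_0 = 1.
Proof. by rewrite /Lp coefB coef1 coefCM coefX mulr0 subr0. Qed.

Lemma Phi0 (xs : seq F) : (Phi xs)`_0 = 1.
Proof. by rewrite /Phi coef0_prod big1 // => x _; rewrite Lp0. Qed.

Lemma coef0_T N b xs : (Tpoly q Q N b xs)`_0 = 1.
Proof. by rewrite /Tpoly coef0M coef0_Hprod coef_poly mul1r. Qed.

Lemma seq_eqto_equiv b b' xs xs' : q - q^-1 != 0 ->
  (forall t, (0 < t)%N -> pQ_t Q q b t xs = pQ_t Q q b' t xs') <->
  (forall N, eqto N (Tpoly q Q N b xs) (Tpoly q Q N b' xs')).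
Proof.
move=> hc; split.
  move=> H N [|j] hj; first by rewrite !coef0_T.
  by rewrite !coef_T // H.
move=> H t ht; have := H t t (leqnn t); rewrite !coef_T //.
exact: mulfI.
Qed.

Lemma K1 N b xs xs' : q != 0 ->
  eqto N (Phi xs * Phi xs' * Lp Q^-1 * Tpoly q Q N b xs)
         (Psi q xs * Phi xs' * Lp (b ^- 2 * Q^-1)).
Proof.
move=> hq.
have -> : Phi xs * Phi xs' * Lp Q^-1 * Tpoly q Q N b xs
   = Phi xs' * (Phi xs * Lp Q^-1 * Tpoly q Q N b xs) by ring.
have -> : Psi q xs * Phi xs' * Lp (b ^- 2 * Q^-1)
   = Phi xs' * (Psi q xs * Lp (b ^- 2 * Q^-1)) by ring.
apply: eqto_mul => //; exact: eqto_key.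
Qed.

Lemma eqto_poly_equiv b b' xs xs' : q != 0 ->
  (forall N, eqto N (Tpoly q Q N b xs) (Tpoly q Q N b' xs')) <->
  Psi q xs * Phi xs' * Lp (b ^- 2 * Q^-1) = Psi q xs' * Phi xs * Lp (b' ^- 2 * Q^-1).
Proof.
move=> hq.
have K2 N : eqto N (Phi xs * Phi xs' * Lp Q^-1 * Tpoly q Q N b' xs')
         (Psi q xs' * Phi xs * Lp (b' ^- 2 * Q^-1)).
  have -> : Phi xs * Phi xs' * Lp Q^-1 * Tpoly q Q N b' xs'
     = Phi xs' * Phi xs * Lp Q^-1 * Tpoly q Q N b' xs' by ring.
  exact: K1.
split.
  move=> H; apply: eqto_all => N.
  apply: (eqto_trans (eqto_sym (@K1 N b xs xs' hq))).
  apply: (eqto_trans _ (K2 N)).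
  by apply: eqto_mul => //; apply: H.
move=> E N; apply: (@eqto_cancel _ N (Phi xs * Phi xs' * Lp Q^-1)).
  by rewrite !coef0M !Phi0 Lp0 !mul1r oner_neq0.
apply: (eqto_trans (@K1 N b xs xs' hq)).
by rewrite E; apply: eqto_sym.
Qed.

End G.


Section H.
Variables (F : closedFieldType).

Lemma pow_inj (r w : F) : r != 0 -> w != 0 ->
  (forall n, (0 < n)%N -> r ^+ n != 1) -> injective (fun m => r ^+ m * w).
Proof.
move=> hr hw hn m n /= /(mulIf hw) E.
have key : forall m n, (m < n)%N -> r ^+ m = r ^+ n -> False.
  move=> a c hac Eac.
  have : r ^+ a * r ^+ (c - a) = r ^+ a * 1 by rewrite -exprD subnKC ?mulr1 // ltnW.
  move/(mulfI (expf_neq0 a hr)) => /eqP; apply/negP; apply: hn; lia.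
case: (ltngtP m n) => // h; first by case: (key _ _ h E).
by case: (key _ _ h (esym E)).
Qed.

Lemma pigeon (r : F) (S : seq F) : r != 0 ->
  (forall n, (0 < n)%N -> r ^+ n != 1) ->
  all (fun x => x != 0) S -> S != [::] -> exists2 w, w \in S & r * w \notin S.
Proof.
move=> hr hn hall hS.
case: (boolP (all (fun w => r * w \in S) S)) => [Hall|]; last first.
  by rewrite -has_predC => /hasP [w hw hnw]; exists w.
exfalso.
case: S hS hall Hall => // w0 S _ hall Hall.
have hw0 : w0 != 0 by move/allP: hall; apply; rewrite mem_head.
have hm : forall m, r ^+ m * w0 \in w0 :: S.
  elim=> [|m IH]; first by rewrite expr0 mul1r mem_head.
  by rewrite exprS -mulrA; move/allP: Hall; apply.
have := uniq_leq_size (mkseq_uniq (size (w0 :: S)).+1 (pow_inj hr hw0 hn)).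
move/(_ (w0 :: S)).
have Hs : {subset mkseq (fun m => r ^+ m * w0) (size (w0 :: S)).+1 <= w0 :: S}.
  by move=> x /mapP [m _ ->].
move/(_ Hs). by rewrite size_mkseq ltnn.
Qed.


Lemma hornerLp (a u : F) : (1 - a%:P * 'X).[u] = 1 - a * u.
Proof. by rewrite !hornerE. Qed.

Lemma Phi_eval (X : seq F) u : (Phi X).[u] = \prod_(x <- X) (1 - x * u).
Proof. by rewrite /Phi horner_prod; apply: eq_bigr => x _; rewrite hornerLp. Qed.

Lemma Psi_eval (q : F) (X : seq F) u : (Psi q X).[u] = \prod_(x <- X) (1 - q ^- 2 * x * u).
Proof. by rewrite /Psi horner_prod; apply: eq_bigr => x _; rewrite hornerLp. Qed.

Lemma Lp_neq0 (a : F) : 1 - a%:P * 'X != 0.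
Proof.
apply/eqP => h; have := Lp0 a; rewrite /Lp h coef0 => /eqP.
by rewrite eq_sym oner_eq0.
Qed.

Lemma step (q : F) (X Y : seq F) w : q != 0 -> w != 0 -> w \in X ->
  q ^+ 2 * w \notin X -> Psi q X * Phi Y = Psi q Y * Phi X -> w \in Y.
Proof.
move=> hq hw hwX hnX E.
have : (Psi q X * Phi Y).[w^-1] = 0.
  rewrite E hornerM Phi_eval; apply/eqP; rewrite mulf_eq0 prodf_seq_eq0; apply/orP; right.
  by apply/hasP; exists w => //=; rewrite mulfV ?subrr.
move/eqP; rewrite hornerM mulf_eq0 => /orP [|].
  rewrite Psi_eval prodf_seq_eq0 => /hasP [x hx /=]; rewrite subr_eq0 => /eqP h.
  have hx' : x = q ^+ 2 * w * (q ^- 2 * x * w^-1) by field; rewrite hq hw.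
  by rewrite -h mulr1 in hx'; move: hnX; rewrite -hx' hx.
rewrite Phi_eval prodf_seq_eq0 => /hasP [y hy /=]; rewrite subr_eq0 => /eqP h.
have hy' : y = w * (y * w^-1) by field.
by rewrite -h mulr1 in hy'; rewrite -hy'.
Qed.

Lemma Psi_rem (q : F) (X : seq F) w : w \in X ->
  Psi q X = (1 - (q ^- 2 * w)%:P * 'X) * Psi q (rem w X).
Proof. by move=> hw; rewrite /Psi (perm_big _ (perm_to_rem hw)) big_cons. Qed.

Lemma Phi_rem (X : seq F) w : w \in X ->
  Phi X = (1 - w%:P * 'X) * Phi (rem w X).
Proof. by move=> hw; rewrite /Phi (perm_big _ (perm_to_rem hw)) big_cons. Qed.

Lemma lemA_aux (q : F) : q != 0 -> (forall n, (0 < n)%N -> q ^+ n != 1) ->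
  forall n (X Y : seq F), (size [seq x : F <- X ++ Y | x != 0%R] <= n)%N ->
  Psi q X * Phi Y = Psi q Y * Phi X ->
  perm_eq [seq x : F <- X | x != 0%R] [seq x : F <- Y | x != 0%R].
Proof.
move=> hq hqn; elim=> [|n IH] X Y hS E.
  move: hS; rewrite filter_cat size_cat leqn0 addn_eq0 !size_eq0.
  by case/andP=> /eqP -> /eqP ->.
case: (eqVneq [seq x : F <- X ++ Y | x != 0%R] [::]) => [h0|hne].
  move: h0; rewrite filter_cat => /eqP; rewrite -size_eq0 size_cat addn_eq0 !size_eq0.
  by case/andP=> /eqP -> /eqP ->.
have hq2 : q ^+ 2 != 0 by rewrite expf_neq0.
have hq2n : forall m, (0 < m)%N -> (q ^+ 2) ^+ m != 1.
  by move=> m hm; rewrite -exprM; apply: hqn; lia.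
have [w hwS hnS] := pigeon hq2 hq2n (filter_all _ _) hne.
move: hwS; rewrite mem_filter => /andP [hw hwXY].
have hn : q ^+ 2 * w \notin X ++ Y.
  by move: hnS; rewrite mem_filter mulf_neq0.
clear hne hnS.
wlog hwX : X Y hS E hwXY hn / w \in X.
  move=> Hw; move: (hwXY); rewrite mem_cat => /orP [hX|hY]; first exact: Hw.
  rewrite perm_sym; apply: Hw => //.
  - by rewrite filter_cat size_cat addnC -size_cat -filter_cat.
  - by rewrite mem_cat orbC -mem_cat.
  - by rewrite mem_cat orbC -mem_cat.
have hnX : q ^+ 2 * w \notin X by move: hn; rewrite mem_cat negb_or => /andP[].
have hwY := step hq hw hwX hnX E.
set X1 := rem w X; set Y1 := rem w Y.
have E1 : Psi q X1 * Phi Y1 = Psi q Y1 * Phi X1.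
  move: E; rewrite (Psi_rem q hwX) (Psi_rem q hwY) (Phi_rem hwX) (Phi_rem hwY) -/X1 -/Y1.
  set a := 1 - _ * 'X; set b := 1 - w%:P * 'X => E.
  apply: (mulfI (mulf_neq0 (Lp_neq0 (q ^- 2 * w)) (Lp_neq0 w))).
  rewrite -/a -/b.
  by transitivity (a * Psi q X1 * (b * Phi Y1)); [ring | rewrite E; ring].
have hP : perm_eq (X ++ Y) ((w :: X1) ++ (w :: Y1)).
  by apply: perm_cat; apply: perm_to_rem.
have hS1 : (size [seq x : F <- X1 ++ Y1 | x != 0%R] <= n)%N.
  move: hS; rewrite (perm_size (perm_filter _ hP)) /= hw /= !filter_cat /= hw !size_cat /=.
  lia.
have IH1 := IH X1 Y1 hS1 E1.
apply: perm_trans (perm_filter _ (perm_to_rem hwX)) _; rewrite /= hw -/X1.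
rewrite perm_sym; apply: perm_trans (perm_filter _ (perm_to_rem hwY)) _; rewrite /= hw -/Y1.
by rewrite perm_cons perm_sym.
Qed.


Lemma zero_filter (X : seq F) :
  [seq x : F <- X | predC (fun x : F => x != 0%R) x] =
  nseq (size X - size [seq x : F <- X | x != 0%R]) 0.
Proof.
have h : all (pred1 0) [seq x : F <- X | predC (fun x : F => x != 0%R) x].
  by apply/allP => x; rewrite mem_filter /= negbK => /andP[].
rewrite (all_pred1P _ _ h) !size_filter; congr nseq.
by rewrite -(count_predC (fun x : F => x != 0%R) X) addKn.
Qed.

Lemma lemA (q : F) (X Y : seq F) : q != 0 -> (forall n, (0 < n)%N -> q ^+ n != 1) ->
  size X = size Y -> Psi q X * Phi Y = Psi q Y * Phi X -> perm_eq X Y.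
Proof.
move=> hq hqn hs E.
have P := lemA_aux hq hqn (leqnn _) E.
rewrite -(perm_filterC (fun x : F => x != 0%R) X) perm_sym.
rewrite -(perm_filterC (fun x : F => x != 0%R) Y) perm_sym.
rewrite !zero_filter hs (perm_size P).
by rewrite perm_cat2r.
Qed.

End H.


Section I.
Variables (F : closedFieldType) (q Q : F).

Definition ys (b : F) (d : nat) := [seq q ^- (2 * z.-1) * b ^- 2 * Q^-1 | z <- iota 1 d].

Lemma prod_ys b d :
  \prod_(1 <= z < d.+1) ('X - (q ^- (2 * z.-1) * b ^- 2 * Q^-1)%:P)
  = \prod_(y <- ys b d) ('X - y%:P).
Proof. by rewrite big_map /index_iota subSS subn0. Qed.

Lemma scal_step (a : F) d : q ^- 2 * (q ^- (2 * d) * a) = q ^- (2 * d.+1) * a.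
Proof. by rewrite mulrA -invfM -exprD mulnS. Qed.

Lemma tele b d :
  Psi q (ys b d) * Lp (b ^- 2 * Q^-1) = Phi (ys b d) * Lp (q ^- (2 * d) * b ^- 2 * Q^-1).
Proof.
elim: d => [|d IH].
  by rewrite /ys /= /Psi /Phi !big_nil muln0 expr0 invr1 /Lp; ring.
have hy : ys b d.+1 = ys b d ++ [:: q ^- (2 * d) * b ^- 2 * Q^-1].
  by rewrite /ys -[d.+1]addn1 iotaD map_cat.
rewrite hy /Psi /Phi !big_cat /= !big_seq1 -/(Psi q _) -/(Phi _).
have e1 : 1 - (q ^- 2 * (q ^- (2 * d) * b ^- 2 * Q^-1))%:P * 'X
        = Lp (q ^- (2 * d.+1) * b ^- 2 * Q^-1).
  by rewrite /Lp !mulrA -invfM -exprD mulnS.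
have e2 : 1 - (q ^- (2 * d) * b ^- 2 * Q^-1)%:P * 'X = Lp (q ^- (2 * d) * b ^- 2 * Q^-1) by [].
rewrite e1 e2.
transitivity (Psi q (ys b d) * Lp (b ^- 2 * Q^-1) * Lp (q ^- (2 * d.+1) * b ^- 2 * Q^-1)).
  by rewrite -!mulrA [X in _ * X = _]mulrC.
by rewrite IH.
Qed.


Lemma roots_spec (phi : {poly F}) :
  phi = lead_coef phi *: \prod_(z <- roots_of phi) ('X - z%:P).
Proof. exact: (svalP (closed_field_poly_normal phi)). Qed.

Lemma size_roots (phi : {poly F}) : phi != 0 -> size (roots_of phi) = (size phi).-1.
Proof.
move=> hp; rewrite [in RHS](roots_spec phi) size_scale ?size_prod_XsubC //.
by rewrite lead_coef_eq0.
Qed.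

Lemma pt_nil t : (0 < t)%N -> p_t q t [::] = 0.
Proof.
move=> ht; rewrite /p_t big_pred0 // => l.
apply/negbTE; rewrite /is_part big_ord0 negb_and; apply/orP; right.
by rewrite eq_sym -lt0n ht.
Qed.

Lemma uQ_E (phi : {poly F}) : phi != 0 ->
  uQ Q q phi = (lead_coef phi * q ^+ (size phi).-1,
                fun n => pQ_t Q q (lead_coef phi) n.+1 (roots_of phi)).
Proof.
move=> hp; rewrite /uQ; case: eqP => [h0|//].
rewrite h0 expr0 mulr1; congr pair; apply: functional_extensionality => n.
have : size (roots_of phi) = 0%N by rewrite size_roots.
move/size0nil => ->.
rewrite /pQ_t pt_nil // add0r big1_seq ?mulr0 ?addr0 //.
by move=> z /andP [_]; rewrite mem_index_iota => /andP [hz _]; rewrite pt_nil ?mulr0.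
Qed.

Lemma hc_of : (forall n, (0 < n)%N -> q ^+ n != 1) -> q != 0 -> q - q^-1 != 0.
Proof.
move=> hn hq; apply/eqP => /subr0_eq h.
have := hn 2%N isT; rewrite expr2 {2}h mulfV //.
by rewrite eqxx.
Qed.

End I.


Section J.
Variables (F : closedFieldType) (q Q : F).
Hypotheses (hq : q != 0) (hqn : forall n, (0 < n)%N -> q ^+ n != 1).

Lemma uQ_equiv (phi phi' : {poly F}) : phi != 0 -> phi' != 0 ->
  uQ Q q phi = uQ Q q phi' <->
  lead_coef phi * q ^+ (size phi).-1 = lead_coef phi' * q ^+ (size phi').-1 /\
  Psi q (roots_of phi) * Phi (roots_of phi') * Lp (lead_coef phi ^- 2 * Q^-1) =
  Psi q (roots_of phi') * Phi (roots_of phi) * Lp (lead_coef phi' ^- 2 * Q^-1).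
Proof.
move=> hp hp'; rewrite (uQ_E q Q hp) (uQ_E q Q hp').
have hc := hc_of hqn hq.
set b := lead_coef phi; set b' := lead_coef phi'.
set X := roots_of phi; set X' := roots_of phi'.
have E1 := @seq_eqto_equiv F q Q b b' X X' hc.
have E2 := @eqto_poly_equiv F q Q b b' X X' hq.
split.
  case=> h1 h2; split => //; apply/E2/E1 => t ht.
  by have := congr1 (fun g => g t.-1) h2; rewrite /= prednK.
case=> h1 /E2 /E1 h2; congr pair => //; apply: functional_extensionality => n.
exact: h2.
Qed.


Lemma Psi_cat (X Y : seq F) : Psi q (X ++ Y) = Psi q X * Psi q Y.
Proof. by rewrite /Psi big_cat. Qed.
Lemma Phi_cat (X Y : seq F) : Phi (X ++ Y) = Phi X * Phi Y.
Proof. by rewrite /Phi big_cat. Qed.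

Lemma part_i (phi phi' : {poly F}) : phi != 0 -> phi' != 0 ->
  ((size phi').-1 <= (size phi).-1)%N ->
     (uQ Q q phi = uQ Q q phi' <->
      phi = q ^- ((size phi).-1 - (size phi').-1) *:
              (phi' * \prod_(1 <= z < ((size phi).-1 - (size phi').-1).+1)
                 ('X - (q ^- (2 * z.-1) * (lead_coef phi) ^- 2 * Q^-1)%:P))).
Proof.
move=> hp hp' hk; rewrite uQ_equiv // prod_ys.
set k := (size phi).-1; set k' := (size phi').-1; set d := (k - k')%N.
have hkd : k = (k' + d)%N by rewrite /d subnKC.
set b := lead_coef phi; set b' := lead_coef phi'.
set X := roots_of phi; set X' := roots_of phi'; set Y := ys q Q b d.
have hb0 : b != 0 by rewrite lead_coef_eq0.
have hb0' : b' != 0 by rewrite lead_coef_eq0.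
have sX : size X = k by rewrite size_roots.
have sX' : size X' = k' by rewrite size_roots.
have sY : size Y = d by rewrite size_map size_iota.
have hqd : q ^+ d != 0 by rewrite expf_neq0.
have sp : phi = b *: \prod_(z <- X) ('X - z%:P) := roots_spec phi.
have sp' : phi' = b' *: \prod_(z <- X') ('X - z%:P) := roots_spec phi'.
have hL : Lp (b ^- 2 * Q^-1) != 0 := Lp_neq0 _.
split.
- case=> h1 PI.
  have hbb : b' = b * q ^+ d.
    apply: (mulIf (expf_neq0 k' hq)); rewrite -h1 hkd exprD; ring.
  have hb'2 : b' ^- 2 * Q^-1 = q ^- (2 * d) * b ^- 2 * Q^-1.
    by rewrite hbb exprMn invfM -exprM mulnC; ring.
  rewrite hb'2 in PI.
  have PXY : Psi q X * Phi (X' ++ Y) = Psi q (X' ++ Y) * Phi X.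
    apply: (mulIf hL); rewrite Psi_cat Phi_cat.
    transitivity (Psi q X * Phi X' * Lp (b ^- 2 * Q^-1) * Phi Y); first by ring.
    rewrite PI.
    transitivity (Psi q X' * Phi X * (Phi Y * Lp (q ^- (2 * d) * b ^- 2 * Q^-1))); first by ring.
    rewrite -tele; ring.
  have hperm : perm_eq X (X' ++ Y).
    by apply: (lemA hq hqn) PXY; rewrite size_cat sX sX' sY.
  rewrite {1}sp (perm_big _ hperm) big_cat /= sp' -scalerAl scalerA.
  congr (_ *: _); rewrite hbb mulrC -mulrA mulfV ?mulr1 //.
- move=> H.
  have hb : b = q ^- d * b'.
    by rewrite /b {1}H lead_coefZ lead_coefM (monicP (monic_prod_XsubC _ _ _)) mulr1.
  have h1 : b * q ^+ k = b' * q ^+ k' by rewrite hb hkd exprD; field.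
  split => //.
  have hperm : perm_eq X (X' ++ Y).
    apply: prod_XsubC_eq; apply: (scalerI hb0).
    by rewrite -sp {1}H sp' -scalerAl scalerA -hb big_cat.
  have hbb : b' = b * q ^+ d by rewrite hb; field.
  have hb'2 : b' ^- 2 * Q^-1 = q ^- (2 * d) * b ^- 2 * Q^-1.
    by rewrite hbb exprMn invfM -exprM mulnC; ring.
  have ePsi : Psi q X = Psi q (X' ++ Y) by rewrite /Psi (perm_big _ hperm).
  have ePhi : Phi X = Phi (X' ++ Y) by rewrite /Phi (perm_big _ hperm).
  rewrite hb'2 ePsi ePhi Psi_cat Phi_cat.
  transitivity (Psi q X' * Phi X' * (Psi q Y * Lp (b ^- 2 * Q^-1))); first by ring.
  rewrite tele; ring.
Qed.

End J.


Section K.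
Variables (F : closedFieldType) (q Q : F).
Hypotheses (hq : q != 0) (hqn : forall n, (0 < n)%N -> q ^+ n != 1).

Lemma inj_CQ : {in inCQ Q &, injective (uQ Q q)}.
Proof.
move=> phi phi' h1 h2 E.
wlog hk : phi phi' h1 h2 E / ((size phi').-1 <= (size phi).-1)%N.
  move=> W; case: (leqP (size phi').-1 (size phi).-1) => h; first exact: W.
  by apply/esym/W => //; apply: ltnW.
have hp : phi != 0 by case/andP: h1.
have hp' : phi' != 0 by case/andP: h2.
have H := (@part_i F q Q hq hqn phi phi' hp hp' hk).1 E.
have [hd0|hdpos] := posnP ((size phi).-1 - (size phi').-1).
  by rewrite H hd0 big_geq // mulr1 expr0 invr1 scale1r.
exfalso.
have hr : root phi (lead_coef phi ^- 2 * Q^-1).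
  rewrite /root {1}H hornerZ hornerM horner_prod big_ltn; last by lia.
  by rewrite hornerXsubC /= muln0 expr0 invr1 mul1r subrr mul0r mulr0 mulr0.
by move: h1; rewrite unfold_in /inCQ hr andbF.
Qed.

Lemma exist_aux n : forall phi : {poly F}, (size phi <= n)%N -> phi != 0 ->
  exists phi', inCQ Q phi' /\ uQ Q q phi = uQ Q q phi'.
Proof.
elim: n => [|n IH] phi hs hp.
  by move: hp; rewrite -size_poly_eq0; move: hs; rewrite leqn0 => ->.
case: (boolP (root phi (lead_coef phi ^- 2 * Q^-1))) => hr; last first.
  by exists phi; split => //; rewrite /inCQ hp hr.
have [psi hpsi] := factor_theorem _ _ hr.
set r := lead_coef phi ^- 2 * Q^-1 in hpsi.
have hpsi0 : psi != 0 by apply: contraNneq hp => h; rewrite hpsi h mul0r.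
have szphi : size phi = (size psi).+1.
  rewrite hpsi size_mul ?polyXsubC_eq0 // size_XsubC addn2 /=.
  done.
have szpsi : (0 < size psi)%N by rewrite size_poly_gt0.
set phi1 := q *: psi.
have hp1 : phi1 != 0 by rewrite scale_poly_eq0 negb_or hq hpsi0.
have sz1 : size phi1 = size psi by rewrite size_scale.
have hk : ((size phi1).-1 <= (size phi).-1)%N by rewrite sz1 szphi; lia.
have hd : ((size phi).-1 - (size phi1).-1)%N = 1%N by rewrite sz1 szphi; lia.
have E : uQ Q q phi = uQ Q q phi1.
  apply/(@part_i F q Q hq hqn phi phi1 hp hp1 hk).2.
  rewrite hd big_nat1 /= muln0 expr0 invr1 mul1r -/r expr1 /phi1 -scalerAl scalerA.
  by rewrite mulVf // scale1r.
have hs1 : (size phi1 <= n)%N by rewrite sz1; lia.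
have [phi' [h1 h2]] := IH phi1 hs1 hp1.
by exists phi'; split => //; rewrite E.
Qed.

Lemma exist_CQ (phi : {poly F}) : phi != 0 ->
  exists! phi' : {poly F}, inCQ Q phi' /\ uQ Q q phi = uQ Q q phi'.
Proof.
move=> hp; have [phi' [h1 h2]] := exist_aux (leqnn _) hp.
exists phi'; split => // phi'' [h3 h4].
by apply: inj_CQ => //; rewrite -h2 -h4.
Qed.

End K.

Theorem mainTheorem2 (R : realType) (q Q : R[i]) :
  q != 0 -> (forall n : nat, (0 < n)%N -> q ^+ n != 1) -> Q != 0 ->
  (forall phi phi' : {poly R[i]}, phi != 0 -> phi' != 0 ->
     ((size phi').-1 <= (size phi).-1)%N ->
     (uQ Q q phi = uQ Q q phi' <->
      phi = q ^- ((size phi).-1 - (size phi').-1) *: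
              (phi' * \prod_(1 <= z < ((size phi).-1 - (size phi').-1).+1)
                 ('X - (q ^- (2 * z.-1) * (lead_coef phi) ^- 2 * Q^-1)%:P))))
  /\ {in inCQ Q &, injective (uQ Q q)}
  /\ (forall phi : {poly R[i]}, phi != 0 ->
        exists! phi' : {poly R[i]}, inCQ Q phi' /\ uQ Q q phi = uQ Q q phi').
Proof.
move=> hq hqn hQ; split; [|split].
- by move=> phi phi' hp hp' hk; apply: part_i.
- exact: inj_CQ.
- by move=> phi hp; apply: exist_CQ.
Qed.
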